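(* Consider the eigencurve setting in the context. Let $\tilde i\in\{0,\dots,I_{\max}-1\}$ and let $\lambda_j$ be an eigenvalue of $H$ with $\lambda_j\in[\mu2^{\tilde i},\mu2^{\tilde i+1})$. Then $$v_{t_{\tilde i+1},j}\le15\cdot\frac{\eta_{t_{\tilde i+1}}}{\lambda_j},$$ where $v_{t+1,j}=\sum_{k=0}^t\eta_k^2\prod_{i=k+1}^t(1-\eta_i\lambda_j)^2$ and $\eta_{t_{\tilde i+1}}=\left(L+\mu\sum_{j'=1}^{\tilde i+1}\Delta_{j'}2^{j'-1}\right)^{-1}$.
   Context: Let $H\in\mathbb{R}^{d\times d}$ be symmetric positive definite, with $\mu=\lambda_{\min}(H)$, $L=\lambda_{\max}(H)$ and $\kappa=L/\mu$. Let $I_{\max}=\log_2\kappa$, treated as an integer. Fix integers $0=t_0<\dots<t_{I_{\max}}=T$ with $\Delta_i=t_i-t_{i-1}$. The eigencurve learning rate is $$\eta_t=\frac{1}{L+\mu\sum_{j=1}^{i-1}\Delta_j2^{j-1}+2^{i-1}\mu(t-t_{i-1})}\quad\text{for }t\in[t_{i-1},t_i),$$ and at $t=t_{I_{\max}}=T$ it is given by the same formula with $i=I_{\max}$. *)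

(* Defs.v *)
From mathcomp Require Import all_boot all_order all_algebra.
Set Implicit Arguments. Unset Strict Implicit. Unset Printing Implicit Defensive.
Import Order.TTheory GRing.Theory Num.Theory.
Local Open Scope ring_scope.

Section Eigencurve.
Variable R : realFieldType.
(* mu = lambda_min, L = lambda_max, Imax = log2 kappa, tb i = t_i *)
Variables (mu L : R) (Imax : nat) (tb : nat -> nat).

Definition Delta (i : nat) : nat := (tb i - tb i.-1)%N.

(* phase t = the index i in [1, Imax] with t in [t_{i-1}, t_i);
   for t = t_{Imax} = T (and beyond) it is Imax. *)
Definition phase (t : nat) : nat :=
  minn (\sum_(1 <= k < Imax.+1) (tb k <= t : nat)).+1 Imax.

Definition eta (t : nat) : R :=
  let i := phase t in
  (L + mu * \sum_(1 <= j < i) (Delta j)%:R * 2 ^+ j.-1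
     + 2 ^+ i.-1 * mu * (t - tb i.-1)%:R)^-1.

Definition vvar (t1 : nat) (lam : R) : R :=
  \sum_(0 <= k < t1) eta k ^+ 2 * \prod_(k.+1 <= i < t1) (1 - eta i * lam) ^+ 2.

End Eigencurve.

(* Main.v *)
Require Import Defs.
From mathcomp Require Import all_boot all_order all_algebra.
From mathcomp Require Import zify ring lra.
Import Order.TTheory GRing.Theory Num.Theory.
Local Open Scope ring_scope.

Section Aux.
Variable R : realFieldType.
Variables (mu L : R) (Imax : nat) (tb : nat -> nat).
Hypothesis tb0 : tb 0%N = 0%N.
Hypothesis tbS : forall i, (i < Imax)%N -> (tb i < tb i.+1)%N.

Lemma tb_mono i j : (i <= j <= Imax)%N -> (tb i <= tb j)%N.
Proof.
elim: j => [|j IH] /andP [hij hj]; first by move: hij; rewrite leqn0 => /eqP ->.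
case: (ltngtP i j.+1) hij => // [hlt _|-> _]; last by [].
have h : (tb i <= tb j)%N by apply: IH; rewrite -ltnS hlt /= ltnW.
have := tbS _ hj. lia.
Qed.

Lemma tb_smono i j : (i < j <= Imax)%N -> (tb i < tb j)%N.
Proof.
case: j => [|j] /andP [hij hj] //.
have := tbS _ hj; have : (tb i <= tb j)%N by apply: tb_mono; rewrite -ltnS hij /= ltnW.
lia.
Qed.

Lemma count_eq t p : (p <= Imax)%N -> (tb p <= t)%N ->
  (p = Imax \/ (t < tb p.+1)%N) ->
  (\sum_(1 <= k < Imax.+1) (tb k <= t : nat))%N = p.
Proof.
move=> hp ht hor.
rewrite (@big_cat_nat _ _ _ p.+1 1) //=.
rewrite (eq_big_nat _ _ (F2 := fun _ => 1%N)); last first.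
  move=> i /andP [h1 h2]; have : (tb i <= tb p)%N by apply: tb_mono; lia.
  move=> h; have -> : (tb i <= t)%N by lia. by [].
rewrite sum_nat_const_nat (eq_big_nat _ _ (F2 := fun _ => 0%N)).
  by rewrite sum_nat_const_nat; lia.
move=> i /andP [h1 h2].
case: hor => [hI|hlt]; first lia.
have : (tb p.+1 <= tb i)%N by apply: tb_mono; lia.
move=> h; have -> : (tb i <= t)%N = false by apply/negbTE; rewrite -ltnNge; lia.
by [].
Qed.

Definition Sp (p : nat) : R := \sum_(1 <= j < p.+1) (Delta tb j)%:R * 2 ^+ j.-1.

Lemma eta_formula p t : (p < Imax)%N -> (tb p <= t <= tb p.+1)%N ->
  eta mu L Imax tb t = (L + mu * Sp p + 2 ^+ p * mu * (t - tb p)%:R)^-1.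
Proof.
move=> hp /andP [h1 h2].
rewrite /eta /phase.
case: (ltngtP t (tb p.+1)) h2 => // [hlt _|-> _].
  rewrite (@count_eq t p (ltnW hp) h1) //; last by right.
  by rewrite (minn_idPl hp) /=.
rewrite (@count_eq _ p.+1 hp (leqnn _)) //; last first.
  case: (ltngtP p.+1 Imax) hp => // [hl _|-> _]; [right | by left].
  by apply: tb_smono; lia.
case: (ltngtP p.+1 Imax) hp => // [hl _|hE _].
  rewrite (minn_idPl hl) /= subnn /Sp big_nat_recr //= /Delta /=.
  congr (_^-1); ring.
rewrite hE; have -> : minn Imax.+1 Imax = Imax by lia. rewrite -hE /=. done.
Qed.

End Aux.

Lemma step_ineq (R : realFieldType) (D D' lam v : R) : 0 < lam -> lam <= D ->
  0 < D' -> D' <= D + lam -> v <= 2 * D^-1 / lam ->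
  (1 - D^-1 * lam) ^+ 2 * v + D^-1 ^+ 2 <= 2 * D'^-1 / lam.
Proof.
move=> hl hlD hD' hD'le hv.
have hD : 0 < D by apply: lt_le_trans hlD.
apply: (@le_trans _ _ ((1 - D^-1 * lam) ^+ 2 * (2 * D^-1 / lam) + D^-1 ^+ 2)).
  by rewrite lerD2r ler_wpM2l // sqr_ge0.
apply: (@le_trans _ _ (2 * (D + lam)^-1 / lam)); last first.
  rewrite ler_pM2r ?invr_gt0 // ler_pM2l // lef_pV2 ?posrE //.
  by apply: ltr_wpDr => //; apply: ltW.
rewrite -subr_ge0.
have -> : 2 * (D + lam)^-1 / lam - ((1 - D^-1 * lam) ^+ 2 * (2 * D^-1 / lam) + D^-1 ^+ 2)
   = (D - lam) * (D + 2 * lam) / (D ^+ 3 * (D + lam)).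
  field. apply/and3P; split; rewrite ?lt0r_neq0 //.
  by rewrite addr_gt0.
apply: divr_ge0; first apply: mulr_ge0.
- by rewrite subr_ge0.
- by apply: addr_ge0; apply: ltW => //; rewrite mulr_gt0.
- by apply: mulr_ge0; [apply: exprn_ge0; apply: ltW | apply: addr_ge0; apply: ltW].
Qed.

Lemma vvar_rec (R : realFieldType) (mu L : R) Imax tb t lam :
  vvar mu L Imax tb t.+1 lam =
  (1 - eta mu L Imax tb t * lam) ^+ 2 * vvar mu L Imax tb t lam + eta mu L Imax tb t ^+ 2.
Proof.
rewrite /vvar big_nat_recr //= [\prod_(t.+1 <= i < t.+1) _]big_geq // mulr1.
congr (_ + _).
rewrite big_distrr /=; apply: eq_big_nat => k /andP [_ hk].
by rewrite big_nat_recr //= mulrA mulrC.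
Qed.

Lemma find_phase (tb : nat -> nat) m t : tb 0%N = 0%N -> (t < tb m)%N ->
  exists p, [/\ (p < m)%N, (tb p <= t)%N & (t < tb p.+1)%N].
Proof.
move=> tb0; elim: m => [|m IH] ht; first by rewrite tb0 in ht.
case: (ltnP t (tb m)) => h.
  by have [p [h1 h2 h3]] := IH h; exists p; split => //; apply: ltnW.
by exists m; split.
Qed.

Theorem lemma11 (R : realFieldType) (d : nat) (H : 'M[R]_d)
  (mu L : R) (Imax : nat) (tb : nat -> nat) (ti : nat) (lam : R) :
  H^T = H ->
  (forall v : 'rV[R]_d, v != 0 -> 0 < (v *m H *m v^T) 0 0) ->
  eigenvalue H mu -> (forall a, eigenvalue H a -> mu <= a) ->
  eigenvalue H L -> (forall a, eigenvalue H a -> a <= L) ->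
  L / mu = 2 ^+ Imax ->
  tb 0%N = 0%N -> (forall i, (i < Imax)%N -> (tb i < tb i.+1)%N) ->
  (ti < Imax)%N ->
  eigenvalue H lam -> mu * 2 ^+ ti <= lam -> lam < mu * 2 ^+ ti.+1 ->
  vvar mu L Imax tb (tb ti.+1) lam <= 15 * eta mu L Imax tb (tb ti.+1) / lam.
Proof.
move=> _ hPD hmu _ _ _ hLmu tb0 tbS hti _ hl1 hl2.
have mu_gt0 : 0 < mu.
  case/eigenvalueP: hmu => v hv hv0.
  have := hPD v hv0; rewrite hv -scalemxAl mxE.
  have : 0 <= (v *m v^T) 0 0.
    rewrite mxE; apply: sumr_ge0 => i _; rewrite mxE -expr2; exact: sqr_ge0.
  case: (ltP 0 mu) => // hm hs hp.
  by have := mulr_le0_ge0 hm hs; rewrite leNgt hp.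
have hL : L = mu * 2 ^+ Imax.
  by rewrite -hLmu mulrC divfK // lt0r_neq0.
have h2gt0 : forall n, (0 : R) < 2 ^+ n by move=> n; apply: exprn_gt0.
have h2le : forall m n, (m <= n)%N -> (2 : R) ^+ m <= 2 ^+ n.
  by move=> m n hmn; apply: ler_weXn2l => //; rewrite ler1n.
have lam_gt0 : 0 < lam by apply: lt_le_trans hl1; rewrite mulr_gt0.
have lamL : lam < L.
  by apply: (lt_le_trans hl2); rewrite hL ler_pM2l // h2le.
have L_gt0 : 0 < L by apply: lt_trans lamL.
have Sp_ge0 : forall p, 0 <= Sp R tb p.
  move=> p; apply: sumr_ge0 => j _; apply: mulr_ge0 => //; apply: ltW; exact: h2gt0.
have eta_ge0 : forall t, 0 <= eta mu L Imax tb t.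
  move=> t; rewrite /eta invr_ge0; apply: addr_ge0; first apply: addr_ge0.
  - exact: ltW.
  - apply: mulr_ge0; [exact: ltW | apply: sumr_ge0 => j _; apply: mulr_ge0 => //; apply: ltW; exact: h2gt0].
  - by apply: mulr_ge0 => //; apply: mulr_ge0; apply: ltW.
have key : forall t, (t <= tb ti.+1)%N ->
    vvar mu L Imax tb t lam <= 2 * eta mu L Imax tb t / lam.
  elim => [|t IH] ht.
    rewrite /vvar big_geq //; apply: divr_ge0; [apply: mulr_ge0 => // | exact: ltW].
  have [p [hp1 hp2 hp3]] := @find_phase tb _ _ tb0 ht; move: IH => /(_ (ltnW ht)) IH.
  have hpI : (p < Imax)%N by apply: leq_trans hti.
  rewrite vvar_rec.
  have e1 := @eta_formula R mu L Imax tb tb0 tbS p t hpI.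
  have e2 := @eta_formula R mu L Imax tb tb0 tbS p t.+1 hpI.
  rewrite e1 ?hp2 ?(ltnW hp3) // in IH *.
  rewrite e2 ?hp3 ?(leq_trans hp2) // in IH *.
  apply: step_ineq => //.
  - apply: ltW; apply: (lt_le_trans lamL); rewrite -addrA lerDl.
    apply: addr_ge0; first by apply: mulr_ge0; [exact: ltW | exact: Sp_ge0].
    by apply: mulr_ge0 => //; apply: mulr_ge0; apply: ltW.
  - apply: (lt_le_trans L_gt0); rewrite -addrA lerDl.
    apply: addr_ge0; first by apply: mulr_ge0; [exact: ltW | exact: Sp_ge0].
    by apply: mulr_ge0 => //; apply: mulr_ge0; apply: ltW.
    rewrite subSn //; have -> : ((t - tb p).+1%:R : R) = (t - tb p)%:R + 1 by rewrite natr1.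
    rewrite mulrDr mulr1 addrA lerD2l.
    apply: le_trans hl1; rewrite mulrC ler_pM2l //; apply: h2le; by [].
apply: le_trans (key _ (leqnn _)) _.
rewrite -!mulrA; apply: ler_wpM2r; last by rewrite ler_nat.
by apply: divr_ge0 => //; apply: ltW.
Qed.
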